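(* Let $P$ be a program, $G$ a p-goal and $S$ a scheduling rule. Suppose every infinite p-SLD derivation of $G$ in $P$ via $S$ is pruned by p-$EVR_L$. Then there is a finite bound $l$ such that every resolvent $R$ occurring in any p-SLD derivation of $G$ in $P$ via $S$ satisfies $\#R\le l$.
   Context: A p-atom is a pair $a[p]$ of an atom $a$ and a rational priority $p$. A p-goal is a finite set of p-atoms with pairwise distinct priorities, regarded as a list ordered by increasing priority; $\#G$ is its number of p-atoms. Substitutions act on atoms and leave priorities unchanged. A clause is $h\leftarrow B$ with $h$ an atom and $B$ a p-goal; a program is a finite set of clauses. For p-goals with no common priority, $F+G=F\cup G$; $F|G$ denotes $F+G$ when all priorities of $F$ are smaller than those of $G$. A shifting $\underline{\pi}$ is a strictly increasing bijection $\mathbb{Q}\to\mathbb{Q}$ acting on priorities. Priority derivation step: for a p-goal $a|F$ ($a$ of least priority), clause $c=(h\leftarrow B)$, renaming $\xi$ with $var(a|F)\cap var(c\xi)=\emptyset$, idempotent relevant mgu $\theta$ of $a$ and $h\xi$, shifting $\underline{\pi}$ with $F$, $B\xi\underline{\pi}$ sharing no priority: $a|F\xrightarrow{c\xi,\theta}(F+B\xi\underline{\pi})\theta$. A p-SLD derivation of $G_0$ in $P$ is a finite or infinite sequence $G_0\xrightarrow{c_0\xi_0,\theta_0}G_1\xrightarrow{c_1\xi_1,\theta_1}\cdots$ of such steps with $c_j\in P$ and each $c_j\xi_j$ variable-disjoint from $G_0$ and all earlier renamed clauses; it is via $S$ if all its steps belong to $S$. Lowering: for $c=(h\leftarrow B)$,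 a step $a\lambda\underline{\sigma}|(K\lambda\underline{\sigma}+X)\xrightarrow{c}(X+K\lambda\underline{\sigma}+B\xi''\underline{\theta}'')\alpha''$ is a lowering by $X$ of $a|K\xrightarrow{c}(K+B\xi'\underline{\theta}')\alpha'$; a congruent lowering if some shifting $\underline{\rho}$ has $K\underline{\rho}=K\underline{\sigma}$ and $B\underline{\theta}'\underline{\rho}=B\underline{\theta}''$. Steps are (congruent) lowerings of each other if each is a (congruent) lowering of the other. A set $S$ of steps is deterministic if any two steps of $S$ that are lowerings of each other are congruent lowerings of each other; complete if (i) whenever some step $G\xrightarrow{c}\cdot$ exists, some step $G\xrightarrow{c}\cdot$ lies in $S$, and (ii) $S$ contains every step that is a congruent lowering of each other with a step of $S$. A scheduling rule is a complete deterministic set of priority derivation steps. p-$EVR_L$ check: a derivation $G_0\xrightarrow{\theta_0}G_1\xrightarrow{\theta_1}\cdots$ is pruned by p-$EVR_L$ if there exist $0\le i<j$, a renaming $\tau$ and a shifting $\underline{\tau}$ with $G_0\theta_0\cdots\theta_{j-1}=G_0\theta_0\cdots\theta_{i-1}\tau$ and $G_j=G_i\tau\underline{\tau}$. *)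

(* Defs.v *)
From mathcomp Require Import all_boot all_order all_algebra.
From Stdlib Require List.
Set Implicit Arguments. Unset Strict Implicit. Unset Printing Implicit Defensive.
Import Order.TTheory GRing.Theory Num.Theory.
Local Open Scope ring_scope.

Inductive term : Type :=
| Var : nat -> term
| Fn  : nat -> seq term -> term.

Inductive atom : Type := Atom : nat -> seq term -> atom.

Definition subst := nat -> term.

Fixpoint tsubst (s : subst) (t : term) : term :=
  match t with
  | Var x => s x
  | Fn f ts => Fn f (map (tsubst s) ts)
  end.

Definition asubst (s : subst) (a : atom) : atom :=
  let: Atom p ts := a in Atom p (map (tsubst s) ts).

Fixpoint tvars (t : term) : seq nat :=
  match t with
  | Var x => [:: x]
  | Fn _ ts => flatten (map tvars ts)
  end.

Definition avars (a : atom) : seq nat :=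
  let: Atom _ ts := a in flatten (map tvars ts).

Definition renaming (xi : subst) : Prop :=
  exists r : nat -> nat, bijective r /\ forall x, xi x = Var (r x).

Definition idempotent (th : subst) : Prop :=
  forall x, tsubst th (th x) = th x.

Definition unifier (th : subst) (a b : atom) : Prop :=
  asubst th a = asubst th b.

Definition mgu (th : subst) (a b : atom) : Prop :=
  unifier th a b /\
  forall s, unifier s a b -> exists eta : subst, forall x, s x = tsubst eta (th x).

(* vars(theta) = dom(theta) U range(theta) *)
Definition subst_vars (th : subst) (v : nat) : Prop :=
  th v <> Var v \/ exists x, th x <> Var x /\ v \in tvars (th x).

Definition relevant (th : subst) (a b : atom) : Prop :=
  forall v, subst_vars th v -> v \in avars a \/ v \in avars b.

Definition patom := (atom * rat)%type.

(* A p-goal is represented by the list of its p-atoms ordered by strictly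
   increasing priority (canonical representation of the finite set). *)
Definition pgoal := seq patom.

Definition prio_lt (x y : patom) : bool := x.2 < y.2.
Definition prio_le (x y : patom) : bool := x.2 <= y.2.

Definition pgoal_wf (G : pgoal) : Prop := sorted prio_lt G.

Definition prios (G : pgoal) : seq rat := map snd G.

Definition no_common_prio (F G : pgoal) : Prop :=
  forall q, q \in prios F -> q \notin prios G.

(* F + G (meaningful when F and G share no priority) *)
Definition padd (F G : pgoal) : pgoal := sort prio_le (F ++ G).

Definition psubst (s : subst) (G : pgoal) : pgoal :=
  map (fun x => (asubst s x.1, x.2)) G.

Definition pvars (G : pgoal) : seq nat := flatten (map (fun x => avars x.1) G).

Definition shifting (pi : rat -> rat) : Prop :=
  bijective pi /\ forall x y : rat, x < y -> pi x < pi y.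

Definition pshift (pi : rat -> rat) (G : pgoal) : pgoal :=
  map (fun x => (x.1, pi x.2)) G.

Record clause := Clause { head : atom ; body : pgoal }.

Definition csubst (s : subst) (c : clause) : clause :=
  Clause (asubst s (head c)) (psubst s (body c)).

Definition cvars (c : clause) : seq nat := avars (head c) ++ pvars (body c).

Definition program := seq clause.

Definition program_wf (P : program) : Prop :=
  forall c, List.In c P -> pgoal_wf (body c).

Definition disjoint_vars (u v : seq nat) : Prop :=
  forall x, x \in u -> x \notin v.

(* A step  a|F --c xi, theta--> (F + B xi pi) theta  records its source,
   the (unrenamed) clause c, the renaming xi, the mgu theta, the shifting pi
   and its target. *)
Record step := Step {
  st_src : pgoal ;
  st_cl  : clause ;
  st_ren : subst ;
  st_mgu : subst ;
  st_sh  : rat -> rat ;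
  st_tgt : pgoal }.

Definition is_step (s : step) : Prop :=
  exists (a : atom) (p : rat) (F : pgoal),
    st_src s = (a, p) :: F /\
    pgoal_wf (st_src s) /\
    pgoal_wf (body (st_cl s)) /\
    renaming (st_ren s) /\
    disjoint_vars (pvars (st_src s)) (cvars (csubst (st_ren s) (st_cl s))) /\
    idempotent (st_mgu s) /\
    relevant (st_mgu s) a (asubst (st_ren s) (head (st_cl s))) /\
    mgu (st_mgu s) a (asubst (st_ren s) (head (st_cl s))) /\
    shifting (st_sh s) /\
    no_common_prio F (pshift (st_sh s) (psubst (st_ren s) (body (st_cl s)))) /\
    st_tgt s = psubst (st_mgu s)
                 (padd F (pshift (st_sh s) (psubst (st_ren s) (body (st_cl s))))).

(* [lowering_w s2 s1 lam sig X a p K] : with s1 = a|K --c--> ..., the step s2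
   has source  a lam sig | (K lam sig + X)  and uses the same clause c. *)
Definition lowering_w (s2 s1 : step) (lam : subst) (sig : rat -> rat)
    (X : pgoal) (a : atom) (p : rat) (K : pgoal) : Prop :=
  is_step s1 /\ is_step s2 /\ st_cl s2 = st_cl s1 /\
  st_src s1 = (a, p) :: K /\
  shifting sig /\
  no_common_prio (pshift sig (psubst lam K)) X /\
  st_src s2 = (asubst lam a, sig p) :: padd (pshift sig (psubst lam K)) X.

Definition lowering (s2 s1 : step) : Prop :=
  exists lam sig X a p K, lowering_w s2 s1 lam sig X a p K.

Definition congruent_lowering (s2 s1 : step) : Prop :=
  exists lam sig X a p K, lowering_w s2 s1 lam sig X a p K /\
    exists rho, shifting rho /\
      pshift rho K = pshift sig K /\
      pshift rho (pshift (st_sh s1) (body (st_cl s1)))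
        = pshift (st_sh s2) (body (st_cl s2)).

Definition lowerings_each_other (s1 s2 : step) : Prop :=
  lowering s1 s2 /\ lowering s2 s1.

Definition congruent_lowerings_each_other (s1 s2 : step) : Prop :=
  congruent_lowering s1 s2 /\ congruent_lowering s2 s1.

Definition step_set := step -> Prop.

Definition deterministic (S : step_set) : Prop :=
  forall s1 s2, S s1 -> S s2 -> lowerings_each_other s1 s2 ->
    congruent_lowerings_each_other s1 s2.

Definition complete (S : step_set) : Prop :=
  (forall (G : pgoal) (c : clause),
      (exists s, is_step s /\ st_src s = G /\ st_cl s = c) ->
      exists s, S s /\ st_src s = G /\ st_cl s = c) /\
  (forall s s', S s -> is_step s' -> congruent_lowerings_each_other s s' -> S s').

Definition scheduling_rule (S : step_set) : Prop :=
  (forall s, S s -> is_step s) /\ complete S /\ deterministic S.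

(* A derivation of G0 is given by its steps f 0, f 1, ... and its length
   n : option nat (Some m = m steps, None = infinite). *)
Definition in_len (n : option nat) (j : nat) : bool :=
  if n is Some m then (j < m)%N else true.

Definition resolvent (G0 : pgoal) (f : nat -> step) (j : nat) : pgoal :=
  if j is j'.+1 then st_tgt (f j') else G0.

(* resolvent index j (0 <= j <= length) *)
Definition in_res (n : option nat) (j : nat) : bool :=
  if n is Some m then (j <= m)%N else true.

Definition pSLD_derivation (P : program) (S : step_set) (G0 : pgoal)
    (f : nat -> step) (n : option nat) : Prop :=
  forall j, in_len n j ->
    S (f j) /\
    List.In (st_cl (f j)) P /\
    st_src (f j) = resolvent G0 f j /\
    disjoint_vars (pvars G0) (cvars (csubst (st_ren (f j)) (st_cl (f j)))) /\
    (forall k, (k < j)%N ->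
       disjoint_vars (cvars (csubst (st_ren (f k)) (st_cl (f k))))
                     (cvars (csubst (st_ren (f j)) (st_cl (f j))))).

(* G0 theta_0 ... theta_(j-1) *)
Fixpoint inst (G0 : pgoal) (f : nat -> step) (j : nat) : pgoal :=
  if j is j'.+1 then psubst (st_mgu (f j')) (inst G0 f j') else G0.

Definition pruned_by_pEVRL (G0 : pgoal) (f : nat -> step) (n : option nat) : Prop :=
  exists i j (tau : subst) (tau' : rat -> rat),
    (i < j)%N /\ in_res n j /\ renaming tau /\ shifting tau' /\
    inst G0 f j = psubst tau (inst G0 f i) /\
    resolvent G0 f j = pshift tau' (psubst tau (resolvent G0 f i)).

(* Main.v *)
From HB Require Import structures.
Require Import Defs.
From mathcomp Require Import all_boot all_order all_algebra.
From Stdlib Require Import Classical ClassicalEpsilon FunctionalExtensionality.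
Set Implicit Arguments. Unset Strict Implicit. Unset Printing Implicit Defensive.
Import Order.TTheory GRing.Theory Num.Theory.

Definition term_eqb (t u : term) : bool :=
  if excluded_middle_informative (t = u) then true else false.
Lemma term_eqP : Equality.axiom term_eqb.
Proof. by move=> t u; rewrite /term_eqb; case: excluded_middle_informative => H; constructor. Qed.
HB.instance Definition _ := hasDecEq.Build term term_eqP.
Definition atom_eqb (t u : atom) : bool :=
  if excluded_middle_informative (t = u) then true else false.
Lemma atom_eqP : Equality.axiom atom_eqb.
Proof. by move=> t u; rewrite /atom_eqb; case: excluded_middle_informative => H; constructor. Qed.
HB.instance Definition _ := hasDecEq.Build atom atom_eqP.

Section TI.
Variable Pt : term -> Prop.
Hypothesis HV : forall x, Pt (Var x).
Hypothesis HF : forall f ts, List.Forall Pt ts -> Pt (Fn f ts).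
Fixpoint tind (t : term) : Pt t :=
  match t with
  | Var x => HV x
  | Fn f ts => HF f ((fix go ts := match ts return List.Forall Pt ts with
                      | [::] => List.Forall_nil _
                      | t :: ts => List.Forall_cons _ (tind t) (go ts) end) ts)
  end.
End TI.

Lemma map_Forall (A B : Type) (f g : A -> B) (ts : seq A) :
  List.Forall (fun t => f t = g t) ts -> map f ts = map g ts.
Proof. elim=> //= x l -> _ ->. by []. Qed.

Lemma mem_flatten_map (A : Type) (g : A -> seq nat) (ts : seq A) x :
  x \in flatten (map g ts) <-> exists t, List.In t ts /\ x \in g t.
Proof.
elim: ts => [|t ts IH] /=; first by split=> // [[t []]].
rewrite mem_cat; split.
- case/orP=> [H|/IH [u [Hu Hx]]]; first by exists t; split; [left|].
  by exists u; split; [right|].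
- case=> u [[<-|Hu] Hx]; first by rewrite Hx.
  by apply/orP; right; apply/IH; exists u.
Qed.

Definition ren (r : nat -> nat) : subst := fun x => Var (r x).

Lemma tsubst_comp s u t : tsubst s (tsubst u t) = tsubst (fun x => tsubst s (u x)) t.
Proof.
elim/tind: t => //= f ts H; congr Fn; rewrite -map_comp; apply: map_Forall.
by apply: List.Forall_impl H.
Qed.

Lemma tsubst_Var t : tsubst Var t = t.
Proof.
elim/tind: t => //= f ts H; congr Fn; rewrite -[RHS]map_id; apply: map_Forall.
by apply: List.Forall_impl H.
Qed.

Lemma eq_tsubst s s' t : (forall x, x \in tvars t -> s x = s' x) -> tsubst s t = tsubst s' t.
Proof.
elim/tind: t => [x /= H|f ts IH H /=]; first by apply: H; rewrite inE.
congr Fn; apply: map_Forall; apply/List.Forall_forall => u Hu.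
have := (List.Forall_forall _ _).1 IH u Hu; apply=> x Hx; apply: H.
by apply/mem_flatten_map; exists u.
Qed.

Lemma tvars_tsubst s t v :
  v \in tvars (tsubst s t) <-> exists x, x \in tvars t /\ v \in tvars (s x).
Proof.
elim/tind: t => [x|f ts IH] /=.
  by split=> [H|[y [Hy H]]]; [exists x; rewrite inE|move: Hy; rewrite inE => /eqP<-].
rewrite -map_comp; split.
- case/mem_flatten_map=> u [Hu Hv] /=.
  have [x [Hx Hv']] := ((List.Forall_forall _ _).1 IH u Hu).1 Hv.
  by exists x; split=> //; apply/mem_flatten_map; exists u.
- case=> x [/mem_flatten_map [u [Hu Hx]] Hv]; apply/mem_flatten_map; exists u; split=> //=.
  by apply: (((List.Forall_forall _ _).1 IH u Hu).2); exists x.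
Qed.

Lemma tsubst_fix s t : tsubst s t = t -> forall v, v \in tvars t -> s v = Var v.
Proof.
elim/tind: t => [x /= H v|f ts IH /= [E] v]; first by rewrite inE => /eqP->.
case/mem_flatten_map=> u [Hu Hv].
have H1 := (List.Forall_forall _ _).1 IH u Hu.
apply: H1 Hv; clear -E Hu; elim: ts E Hu => //= w ws IH [E1 E2] [<-|H] //.
exact: IH.
Qed.

Lemma tvars_ren r t : tvars (tsubst (ren r) t) = map r (tvars t).
Proof.
elim/tind: t => //= f ts IH; rewrite map_flatten -!map_comp; congr flatten.
by apply: map_Forall; apply: List.Forall_impl IH.
Qed.

Definition a2t (a : atom) : term := let: Atom p ts := a in Fn p ts.
Lemma a2t_inj : injective a2t. Proof. by case=> p ts [q us] /= [-> ->]. Qed.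
Lemma a2t_subst s a : a2t (asubst s a) = tsubst s (a2t a). Proof. by case: a. Qed.
Lemma avarsE a : avars a = tvars (a2t a). Proof. by case: a. Qed.

Lemma asubst_comp s u a : asubst s (asubst u a) = asubst (fun x => tsubst s (u x)) a.
Proof. by apply: a2t_inj; rewrite !a2t_subst tsubst_comp. Qed.
Lemma asubst_Var a : asubst Var a = a.
Proof. by apply: a2t_inj; rewrite !a2t_subst tsubst_Var. Qed.
Lemma eq_asubst s s' a : (forall x, x \in avars a -> s x = s' x) -> asubst s a = asubst s' a.
Proof. by rewrite avarsE=> H; apply: a2t_inj; rewrite !a2t_subst; apply: eq_tsubst. Qed.
Lemma avars_asubst s a v :
  v \in avars (asubst s a) <-> exists x, x \in avars a /\ v \in tvars (s x).
Proof. by rewrite !avarsE a2t_subst tvars_tsubst. Qed.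
Lemma avars_ren r a : avars (asubst (ren r) a) = map r (avars a).
Proof. by rewrite !avarsE a2t_subst tvars_ren. Qed.

Section Bsec.
Local Open Scope ring_scope.

Lemma pvars_has G v : (v \in pvars G) = has (fun x => v \in avars x.1) G.
Proof. by elim: G => //= x G IH; rewrite mem_cat IH. Qed.

Lemma has_sort T (p : pred T) le s : has p (sort le s) = has p s.
Proof. by apply/negb_inj; rewrite -!all_predC all_sort. Qed.

Lemma pvars_padd F Y v : (v \in pvars (padd F Y)) = (v \in pvars F) || (v \in pvars Y).
Proof. by rewrite !pvars_has /padd has_sort has_cat. Qed.

Lemma size_padd F Y : size (padd F Y) = (size F + size Y)%N.
Proof. by rewrite /padd size_sort size_cat. Qed.

Lemma psubst_comp s u G : psubst s (psubst u G) = psubst (fun x => tsubst s (u x)) G.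
Proof. by rewrite /psubst -map_comp; apply: eq_map => x /=; rewrite asubst_comp. Qed.
Lemma psubst_Var G : psubst Var G = G.
Proof. by rewrite /psubst -[RHS]map_id; apply: eq_map => [[a p]] /=; rewrite asubst_Var. Qed.
Lemma pshift_comp f g G : pshift f (pshift g G) = pshift (f \o g) G.
Proof. by rewrite /pshift -map_comp. Qed.
Lemma pshift_id G : pshift id G = G.
Proof. by rewrite /pshift -[RHS]map_id; apply: eq_map => [[a p]]. Qed.
Lemma pshift_psubst f s G : pshift f (psubst s G) = psubst s (pshift f G).
Proof. by rewrite /psubst /pshift -!map_comp. Qed.
Lemma prios_pshift f G : prios (pshift f G) = map f (prios G).
Proof. by rewrite /prios /pshift -!map_comp. Qed.
Lemma prios_psubst s G : prios (psubst s G) = prios G.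
Proof. by rewrite /prios /psubst -!map_comp. Qed.
Lemma pvars_pshift f G : pvars (pshift f G) = pvars G.
Proof. by rewrite /pvars /pshift -!map_comp. Qed.
Lemma size_pshift f G : size (pshift f G) = size G. Proof. exact: size_map. Qed.
Lemma size_psubst f G : size (psubst f G) = size G. Proof. exact: size_map. Qed.

Lemma eq_pshift f g G : {in prios G, f =1 g} -> pshift f G = pshift g G.
Proof.
move=> H; apply/eq_in_map => x Hx /=; rewrite H //.
by apply/mapP; exists x.
Qed.
Lemma eq_pshift_inv f g G : pshift f G = pshift g G -> {in prios G, f =1 g}.
Proof.
move=> E q; rewrite /prios => /mapP [x Hx ->].
have := congr1 (map snd) E; rewrite /pshift -!map_comp => E2.
by have := (eq_in_map _ _ _).2 E2 x Hx.
Qed.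

Lemma pvars_psubst s G v :
  v \in pvars (psubst s G) <-> exists x, x \in pvars G /\ v \in tvars (s x).
Proof.
elim: G => [|y G IH] /=; first by split=> // [[x []]].
rewrite !mem_cat; split.
- case/orP=> [/avars_asubst [x [Hx Hv]]|/IH [x [Hx Hv]]]; exists x;
    by rewrite mem_cat ?Hx ?orbT.
- case=> x []; rewrite mem_cat => /orP [Hx|Hx] Hv; apply/orP; [left|right].
    by apply/avars_asubst; exists x.
  by apply/IH; exists x.
Qed.

Lemma eq_psubst s s' G : (forall x, x \in pvars G -> s x = s' x) -> psubst s G = psubst s' G.
Proof.
elim: G => //= y G IH H; rewrite (IH _); last by move=> x Hx; apply: H; rewrite mem_cat Hx orbT.
by rewrite (@eq_asubst s s' y.1) // => x Hx; apply: H; rewrite mem_cat Hx.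
Qed.

Lemma pvars_ren r G : pvars (psubst (ren r) G) = map r (pvars G).
Proof. by elim: G => //= y G; rewrite /pvars /= => ->; rewrite map_cat avars_ren. Qed.

Lemma shift_le f : shifting f -> forall x y, (f x <= f y) = (x <= y).
Proof.
case=> _ H x y; case: (ltgtP x y) => [Hxy|Hxy|->]; last by rewrite lexx.
- by rewrite ltW // H.
- by apply/negbTE; rewrite -ltNge H.
Qed.
Lemma shift_lt f : shifting f -> forall x y, (f x < f y) = (x < y).
Proof. by move=> Hf x y; rewrite !ltNge shift_le. Qed.

Lemma shifting_id : shifting id.
Proof. by split=> //; exists id. Qed.

Lemma shifting_comp f g : shifting f -> shifting g -> shifting (f \o g).
Proof.
move=> [bf Hf] [bg Hg]; split; first exact: bij_comp.
by move=> x y Hxy /=; apply: Hf; apply: Hg.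
Qed.

Lemma shifting_inv f : shifting f -> exists g, [/\ shifting g, cancel f g & cancel g f].
Proof.
move=> Hf; have [[g c1 c2] _] := Hf; exists g; split=> //; split; first by exists f.
by move=> x y Hxy; rewrite -(shift_lt Hf) !c2.
Qed.

Lemma wf_map s f G : {mono f : x y / x < y} -> pgoal_wf G -> pgoal_wf (pshift f (psubst s G)).
Proof.
move=> Hf; rewrite /pgoal_wf /pshift /psubst -map_comp => H.
rewrite sorted_map; apply: sub_sorted H => x y; rewrite /relpre /prio_lt /= Hf.
by [].
Qed.

Lemma padd_nil G : pgoal_wf G -> padd G [::] = G.
Proof.
move=> H; rewrite /padd cats0 sorted_sort //.
  by move=> x y z; rewrite /prio_le; apply: le_trans.
by apply: sub_sorted H => x y; rewrite /prio_lt /prio_le; apply: ltW.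
Qed.

Lemma padd_map s f F Y : {mono f : x y / x <= y} ->
  padd (pshift f (psubst s F)) (pshift f (psubst s Y)) = pshift f (psubst s (padd F Y)).
Proof.
move=> Hf; rewrite /padd /pshift /psubst -!map_comp -map_cat sort_map.
congr map; congr sort; apply: functional_extensionality => x; apply: functional_extensionality => y.
by rewrite /relpre /prio_le /= Hf.
Qed.

End Bsec.

Definition sw (u v x : nat) : nat := if x == u then v else if x == v then u else x.
Lemma swK u v : involutive (sw u v).
Proof.
move=> x; rewrite /sw; case: (eqVneq x u) => [->|Hxu]; first by rewrite eqxx; case: eqVneq.
case: (eqVneq x v) => [->|Hxv]; first by rewrite eqxx.
by rewrite (negbTE Hxu) (negbTE Hxv).
Qed.

Lemma bij_maps_into (r : nat -> nat) (S : seq nat) :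
  injective r -> (forall x, x \notin S -> r x = x) -> forall y, y \in S -> r y \in S.
Proof.
move=> Hr Hout y Hy; apply/negPn/negP => Hry.
have := Hout _ Hry => /Hr E; by move: Hry; rewrite E Hy.
Qed.

Lemma ext_bij (L : seq nat) (g : nat -> nat) : {in L &, injective g} ->
  exists r, [/\ bijective r, {in L, r =1 g} & forall x, x \notin L -> x \notin map g L -> r x = x].
Proof.
elim: L => [|a L IH] Hg; first by exists id; split=> //; exists id.
have Hg' : {in L &, injective g} by move=> x y Hx Hy; apply: Hg; rewrite inE ?Hx ?Hy orbT.
have [r' [Hb' Hr' Ho']] := IH Hg'.
case: (boolP (a \in L)) => HaL.
  exists r'; split=> //.
    by move=> x; rewrite inE => /orP [/eqP->|]; [apply: Hr'|apply: Hr'].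
  move=> x; rewrite !inE !negb_or => /andP [_ H1] /andP [_ H2]; exact: Ho'.
exists (sw (r' a) (g a) \o r'); split.
- by apply: bij_comp => //; apply: inv_bij; apply: swK.
- move=> x; rewrite inE => /orP [/eqP->|Hx] /=; first by rewrite /sw eqxx.
  rewrite /= (Hr' x Hx) /sw.
  have Hxa : x != a by apply: contraNneq HaL => <-.
  have -> : (g x == r' a) = false.
    apply/negbTE; rewrite -Hr' //; apply: contra Hxa => /eqP E.
    by apply/eqP; apply: (bij_inj Hb').
  have -> : (g x == g a) = false.
    apply/negbTE; apply: contra Hxa => /eqP E; apply/eqP.
    by apply: Hg => //; rewrite inE ?Hx ?eqxx ?orbT.
  by [].
- move=> x; rewrite !inE !negb_or => /andP [Hxa HxL] /andP [Hxga HxgL] /=.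
  rewrite (Ho' x HxL HxgL) /sw.
  have -> : (x == r' a) = false; last by rewrite (negbTE Hxga).
  apply/negbTE; case: (boolP (a \in L ++ map g L)) => HaS.
    have H : r' a \in L ++ map g L.
      apply: (bij_maps_into (bij_inj Hb')) => // y.
      by rewrite mem_cat negb_or => /andP [H1 H2]; apply: Ho'.
    apply/negP => /eqP E; move: H; rewrite -E mem_cat.
    by rewrite (negbTE HxL) (negbTE HxgL).
  move: HaS; rewrite mem_cat negb_or => /andP [H1 H2].
  by rewrite (Ho' a H1 H2).
Qed.

Definition maxl (A : seq nat) := foldr maxn 0%N A.
Lemma maxl_ge A x : x \in A -> (x <= maxl A)%N.
Proof.
elim: A => //= a A IH; rewrite inE => /orP [/eqP->|/IH H]; first exact: leq_maxl.
exact: leq_trans H (leq_maxr _ _).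
Qed.
Definition freshf (A : seq nat) (x : nat) : nat := (x + (maxl A).+1)%N.
Lemma freshf_inj A : injective (freshf A).
Proof. by move=> x y; rewrite /freshf => /addIn. Qed.
Lemma freshf_notin A x : freshf A x \notin A.
Proof.
apply/negP => /maxl_ge; rewrite /freshf.
by rewrite leqNgt addnS ltnS leq_addl.
Qed.

Lemma renamingP xi : renaming xi ->
  exists r ri, [/\ cancel r ri, cancel ri r & forall x, xi x = Var (r x)].
Proof. by case=> r [[ri c1 c2] H]; exists r, ri. Qed.
Lemma renaming_ren r : bijective r -> renaming (ren r).
Proof. by move=> Hb; exists r. Qed.

Lemma tsubst_renK r ri t : cancel r ri -> tsubst (ren ri) (tsubst (ren r) t) = t.
Proof.
move=> c; rewrite tsubst_comp -[RHS]tsubst_Var; apply: eq_tsubst => x _.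
by rewrite /ren /= c.
Qed.
Lemma asubst_renK r ri a : cancel r ri -> asubst (ren ri) (asubst (ren r) a) = a.
Proof. by move=> c; apply: a2t_inj; rewrite !a2t_subst tsubst_renK. Qed.
Lemma psubst_renK r ri G : cancel r ri -> psubst (ren ri) (psubst (ren r) G) = G.
Proof.
move=> c; rewrite /psubst -map_comp -[RHS]map_id; apply: eq_map => x /=.
by rewrite asubst_renK //; case: x.
Qed.

Definition cj (r ri : nat -> nat) (th : subst) : subst := fun x => tsubst (ren r) (th (ri x)).

Section Cj.
Variables (r ri : nat -> nat) (c1 : cancel r ri) (c2 : cancel ri r).

Lemma cj_tsubst th t : tsubst (cj r ri th) (tsubst (ren r) t) = tsubst (ren r) (tsubst th t).
Proof. by rewrite !tsubst_comp; apply: eq_tsubst => x _; rewrite /cj /ren /= c1. Qed.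
Lemma cj_asubst th a : asubst (cj r ri th) (asubst (ren r) a) = asubst (ren r) (asubst th a).
Proof. by apply: a2t_inj; rewrite !a2t_subst cj_tsubst. Qed.
Lemma cj_psubst th G : psubst (cj r ri th) (psubst (ren r) G) = psubst (ren r) (psubst th G).
Proof. by rewrite /psubst -!map_comp; apply: eq_map => x /=; rewrite cj_asubst. Qed.

Lemma cj_idem th : Defs.idempotent th -> Defs.idempotent (cj r ri th).
Proof.
move=> H x; rewrite {1}/cj cj_tsubst H //.
Qed.

Lemma ren_inj_t t u : tsubst (ren r) t = tsubst (ren r) u -> t = u.
Proof. by move=> E; rewrite -(tsubst_renK t c1) E tsubst_renK. Qed.

Lemma cj_subst_vars th v : subst_vars (cj r ri th) v -> subst_vars th (ri v).
Proof.
case=> [H|[x [Hx Hv]]].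
  left=> E; apply: H; by rewrite /cj E /ren /= c2.
right; exists (ri x); split.
  by move=> E; apply: Hx; rewrite /cj E /ren /= c2.
move: Hv; rewrite /cj tvars_ren => /mapP [y Hy ->]; by rewrite c1.
Qed.

Lemma cj_relevant th a b : relevant th a b ->
  relevant (cj r ri th) (asubst (ren r) a) (asubst (ren r) b).
Proof.
move=> H v /cj_subst_vars /H; rewrite !avars_ren => [[Hv|Hv]]; [left|right];
  by apply/mapP; exists (ri v).
Qed.

Lemma cj_mgu th a b : mgu th a b -> mgu (cj r ri th) (asubst (ren r) a) (asubst (ren r) b).
Proof.
case=> U M; split; first by rewrite /unifier !cj_asubst U.
move=> s Us.
have [eta Heta] : exists eta : subst, forall x, (fun y => s (r y)) x = tsubst eta (th x).
  apply: M; move: Us; rewrite /unifier !asubst_comp.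
  by [].
exists (fun x => tsubst eta (ren ri x)) => x.
rewrite /cj tsubst_comp.
have -> : s x = s (r (ri x)) by rewrite c2.
rewrite Heta; apply: eq_tsubst => y _ /=; by rewrite c1.
Qed.
End Cj.

Definition cstep (r ri : nat -> nat) (sg : rat -> rat) (s : step) : step :=
  Step (pshift sg (psubst (ren r) (st_src s))) (st_cl s)
       (fun x => tsubst (ren r) (st_ren s x)) (cj r ri (st_mgu s)) (sg \o st_sh s)
       (pshift sg (psubst (ren r) (st_tgt s))).

Lemma cvars_ren r xi c :
  cvars (csubst (fun x => tsubst (ren r) (xi x)) c) = map r (cvars (csubst xi c)).
Proof.
rewrite /cvars /= map_cat -avars_ren -pvars_ren asubst_comp psubst_comp.
by [].
Qed.

Lemma disjoint_map r U V : injective r -> disjoint_vars U V -> disjoint_vars (map r U) (map r V).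
Proof.
move=> Hr H x /mapP [y Hy ->]; rewrite mem_map //; exact: H.
Qed.

Lemma conj_step r ri sg s : cancel r ri -> cancel ri r -> shifting sg ->
  is_step s -> is_step (cstep r ri sg s).
Proof.
move=> c1 c2 Hsg [a [p [F [Hsrc [Hwf [Hwb [Hren [Hdis [Hid [Hrel [Hmgu [Hsh [Hnc Htgt]]]]]]]]]]]]].
have Hr : injective r by apply: can_inj c1.
have Hlt : {mono sg : x y / (x < y)%R} by move=> x y; rewrite (shift_lt Hsg).
have Hle : {mono sg : x y / (x <= y)%R} by move=> x y; rewrite (shift_le Hsg).
have EB : psubst (fun x => tsubst (ren r) (st_ren s x)) (body (st_cl s)) =
          psubst (ren r) (psubst (st_ren s) (body (st_cl s))) by rewrite psubst_comp.
have EH : asubst (fun x => tsubst (ren r) (st_ren s x)) (Defs.head (st_cl s)) =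
          asubst (ren r) (asubst (st_ren s) (Defs.head (st_cl s))) by rewrite asubst_comp.
exists (asubst (ren r) a), (sg p), (pshift sg (psubst (ren r) F)).
split; first by rewrite /= Hsrc.
split; first by rewrite /= Hsrc; apply: wf_map => //; rewrite -Hsrc.
split; first by [].
split.
  have [q [qi [d1 d2 Hq]]] := renamingP Hren.
  exists (r \o q); split; first by apply: bij_comp; [exists ri|exists qi].
  by move=> x /=; rewrite Hq.
split.
  rewrite /= cvars_ren pvars_pshift pvars_ren; exact: disjoint_map.
split; first exact: cj_idem.
split; first by rewrite /= EH; apply: cj_relevant.
split; first by rewrite /= EH; apply: cj_mgu.
split; first exact: shifting_comp.
split.
  move=> x; rewrite /= EB prios_pshift prios_psubst -pshift_comp !prios_pshift prios_psubst.
  move=> /mapP [y Hy ->]; rewrite mem_map; last by apply: (bij_inj (proj1 Hsg)).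
  by have := Hnc y; rewrite prios_pshift prios_psubst; apply.
rewrite /= EB -pshift_comp.
rewrite [X in padd _ (pshift sg X)]pshift_psubst padd_map // -pshift_psubst.
by rewrite cj_psubst // Htgt.
Qed.

Lemma rel_out th a b x : relevant th a b -> x \notin avars a ++ avars b -> th x = Var x.
Proof.
move=> H Hx; case: (th x =P Var x) => // /eqP Hne.
have [] := H x; first by left; apply/eqP.
  by move=> Ha; move: Hx; rewrite mem_cat Ha.
by move=> Hb; move: Hx; rewrite mem_cat Hb orbT.
Qed.

Lemma tsubst_is_var s t v : tsubst s t = Var v -> exists w, t = Var w /\ s w = Var v.
Proof. by case: t => //= w E; exists w. Qed.

Lemma mgu_unique a b th1 th2 : Defs.idempotent th1 -> relevant th1 a b -> mgu th1 a b ->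
  relevant th2 a b -> mgu th2 a b ->
  exists d, bijective d /\ forall x, th2 x = tsubst (ren d) (th1 x).
Proof.
move=> Hid Hr1 [U1 M1] Hr2 [U2 M2].
set Z := avars a ++ avars b.
have [e1 He1] := M1 th2 U2.
have [e2 He2] := M2 th1 U1.
have Hfix : forall x v, v \in tvars (th1 x) -> th1 v = Var v.
  by move=> x; apply: tsubst_fix; apply: Hid.
pose d0 v := if e1 v is Var w then w else v.
have Hd0 : forall v, th1 v = Var v -> e1 v = Var (d0 v) /\ e2 (d0 v) = Var v.
  move=> v Hv; have E : tsubst e2 (e1 v) = Var v.
    by rewrite -Hv He2 He1 Hv.
  have [w [Ew Ew2]] := tsubst_is_var E.
  by rewrite /d0 Ew.
have Hinj : forall u v, th1 u = Var u -> th1 v = Var v -> d0 u = d0 v -> u = v.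
  move=> u v Hu Hv E; have [_ E1] := Hd0 u Hu; have [_ E2] := Hd0 v Hv.
  by move: E1; rewrite E E2 => [[]].
set L := [seq v <- Z | th1 v == Var v].
have HL : forall v, v \in L -> th1 v = Var v by move=> v; rewrite mem_filter => /andP [/eqP].
have HLZ : forall v, v \in L -> v \in Z by move=> v; rewrite mem_filter => /andP [].
have [r [Hb Hr Ho]] := @ext_bij L d0 (fun u v Hu Hv => Hinj u v (HL u Hu) (HL v Hv)).
exists r; split=> // x; rewrite He1; apply: eq_tsubst => v Hv.
have Fv := Hfix x v Hv; have [-> _] := Hd0 v Fv; rewrite /ren; congr Var.
case: (boolP (v \in Z)) => HvZ.
  by rewrite Hr // mem_filter HvZ Fv eqxx.
have Ed : d0 v = v.
  have := rel_out Hr2 HvZ; rewrite He1 Fv /= => E.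
  by have [E' _] := Hd0 v Fv; move: E; rewrite E' => [[]].
rewrite Ed Ho //.
  by apply: contra HvZ; apply: HLZ.
apply/mapP => [[u Hu E]]; have Eu : u = v by apply: Hinj => //; [apply: HL | rewrite Ed].
by move: HvZ; rewrite -Eu HLZ.
Qed.

Lemma step_src s : is_step s -> exists a p F, st_src s = (a, p) :: F /\ pgoal_wf F.
Proof.
case=> a [p [F [E [Hwf _]]]]; exists a, p, F; split=> //.
by move: Hwf; rewrite E /pgoal_wf /= => /path_sorted.
Qed.

Lemma shift_mono_le f : shifting f -> {mono f : x y / (x <= y)%R}.
Proof. by move=> H x y; rewrite (shift_le H). Qed.
Lemma shift_mono_lt f : shifting f -> {mono f : x y / (x < y)%R}.
Proof. by move=> H x y; rewrite (shift_lt H). Qed.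

Lemma wf_conj f r G : shifting f -> pgoal_wf G -> pgoal_wf (pshift f (psubst (ren r) G)).
Proof. by move=> H; apply: wf_map; apply: shift_mono_lt. Qed.

Lemma no_common_nil F : no_common_prio F [::].
Proof. by []. Qed.

Lemma unconj r ri sg sgi G : cancel r ri -> cancel sg sgi ->
  pshift sgi (psubst (ren ri) (pshift sg (psubst (ren r) G))) = G.
Proof.
move=> c1 c2; rewrite -pshift_psubst psubst_renK // pshift_comp -[RHS]pshift_id.
by apply: eq_pshift => q _ /=; rewrite c2.
Qed.

Lemma lowerings_conj s1 s2 r ri sg sgi a p F :
  is_step s1 -> is_step s2 -> st_cl s2 = st_cl s1 -> cancel r ri -> cancel ri r ->
  shifting sg -> cancel sg sgi -> cancel sgi sg -> shifting sgi ->
  st_src s1 = (a, p) :: F -> pgoal_wf F ->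
  st_src s2 = pshift sg (psubst (ren r) (st_src s1)) -> lowerings_each_other s1 s2.
Proof.
move=> H1 H2 Ec c1 c2 Hsg d1 d2 Hsgi E1 Hwf E2; split.
- exists (ren ri), sgi, [::], (asubst (ren r) a), (sg p), (pshift sg (psubst (ren r) F)).
  split=> //; split=> //; split; first by rewrite Ec.
  split; first by rewrite E2 E1.
  split=> //; split=> //.
  by rewrite unconj // padd_nil // E1 asubst_renK // d1.
- exists (ren r), sg, [::], a, p, F; do 6 split=> //.
  by rewrite E2 E1 padd_nil //; apply: wf_conj.
Qed.

Lemma det_prio S s1 s2 r ri sg a p F : scheduling_rule S -> S s1 -> S s2 ->
  st_cl s2 = st_cl s1 -> cancel r ri -> cancel ri r -> shifting sg ->
  st_src s1 = (a, p) :: F ->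
  st_src s2 = pshift sg (psubst (ren r) (st_src s1)) ->
  exists z, [/\ shifting z, pshift z F = pshift sg F &
    pshift z (pshift (st_sh s1) (body (st_cl s1))) = pshift (st_sh s2) (body (st_cl s1))].
Proof.
move=> [HS [_ Hdet]] S1 S2 Ec c1 c2 Hsg E1 E2.
have [sgi [Hsgi d1 d2]] := shifting_inv Hsg.
have [a1 [p1 [F1 [E1' Hwf]]]] := step_src (HS _ S1).
move: E1'; rewrite E1 => [[Ea Ep EF]]; subst a1 p1 F1.
have [_ CL] :=
  Hdet s1 s2 S1 S2 (lowerings_conj (HS _ S1) (HS _ S2) Ec c1 c2 Hsg d1 d2 Hsgi E1 Hwf E2).
case: CL => lam [sig [X [a' [p' [K [LW [rho [Hrho [R1 R2]]]]]]]]].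
case: LW => _ [_ [_ [Es1 [Hsig [_ Es2]]]]].
move: Es1; rewrite E1 => [[_ _ EK]]; subst K.
move: Es2; rewrite E2 E1 => [[_ _ EF]].
have HX : X = [::].
  have := congr1 size EF; rewrite size_padd !size_pshift !size_psubst.
  by move/eqP; rewrite -{1}(addn0 (size F)) eqn_add2l eq_sym => /eqP /size0nil.
subst X; rewrite padd_nil in EF; last by apply: wf_map => //; apply: shift_mono_lt.
exists rho; split=> //; last by rewrite R2 Ec.
rewrite R1; apply: eq_pshift => q Hq.
by have := congr1 prios EF; rewrite !prios_pshift !prios_psubst => /eq_in_map /(_ q Hq) ->.
Qed.

Lemma S_conj S s r ri sg : scheduling_rule S -> S s -> cancel r ri -> cancel ri r ->
  shifting sg -> S (cstep r ri sg s).
Proof.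
move=> HSr Ss c1 c2 Hsg; have [HS [[Hc1 Hc2] Hdet]] := HSr.
have Hs := HS s Ss; have Hcs := conj_step c1 c2 Hsg Hs.
have [s'' [S'' [Es'' Ec'']]] := Hc1 (st_src (cstep r ri sg s)) (st_cl s)
  (ex_intro _ _ (conj Hcs (conj erefl erefl))).
have [a [p [F [EF HwF]]]] := step_src Hs.
have Hs'' := HS _ S''.
have [z [Hz Rz1 Rz2]] := det_prio HSr Ss S'' Ec'' c1 c2 Hsg EF Es''.
have [sgi [Hsgi d1 d2]] := shifting_inv Hsg.
have [zi [Hzi e1 e2]] := shifting_inv Hz.
have HzF : {in prios F, z =1 sg} by apply: eq_pshift_inv.
set K' := pshift sg (psubst (ren r) F).
have EK : st_src (cstep r ri sg s) = (asubst (ren r) a, sg p) :: K' by rewrite /= EF.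
have HwK : pgoal_wf K' by apply: wf_conj.
apply: (Hc2 s'' _ S'' Hcs); split.
- exists Var, id, [::], (asubst (ren r) a), (sg p), K'.
  split.
    do 3 (split; first by []).
    split; first by [].
    split; first exact: shifting_id.
    split; first by [].
    by rewrite Es'' EK asubst_Var psubst_Var pshift_id padd_nil.
  exists (z \o sgi); split; first exact: shifting_comp.
  split.
    rewrite pshift_id /K' pshift_comp !pshift_psubst; congr psubst.
    by rewrite -Rz1; apply: eq_pshift => q _ /=; rewrite d1.
  rewrite /= Ec'' -Rz2 !pshift_comp; apply: eq_pshift => q _ /=; by rewrite d1.
- exists Var, id, [::], (asubst (ren r) a), (sg p), K'.
  split.
    do 2 (split; first by []).
    split; first by rewrite Ec''.
    split; first by rewrite Es'' EK.
    split; first exact: shifting_id.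
    split; first by [].
    by rewrite EK asubst_Var psubst_Var pshift_id padd_nil.
  exists (sg \o zi); split; first exact: shifting_comp.
  split.
    rewrite pshift_id /K' pshift_comp !pshift_psubst; congr psubst.
    apply: eq_pshift => q Hq /=; by rewrite -{1}(HzF q Hq) e1.
  rewrite /= Ec'' -Rz2 !pshift_comp; apply: eq_pshift => q _ /=; by rewrite e1.
Qed.

Lemma cvars_ren' r c : cvars (csubst (ren r) c) = map r (cvars c).
Proof. by rewrite /cvars /= avars_ren pvars_ren map_cat. Qed.

Lemma renaming_eq xi : renaming xi -> exists r ri, [/\ cancel r ri, cancel ri r & xi = ren r].
Proof.
move=> /renamingP [r [ri [c1 c2 H]]]; exists r, ri; split=> //.
by apply: functional_extensionality => x; rewrite H.
Qed.

Lemma is_stepP s : is_step s -> exists a p F r1 r1i,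
  [/\ st_src s = (a, p) :: F, pgoal_wf F, cancel r1 r1i, cancel r1i r1 & st_ren s = ren r1] /\
  [/\ disjoint_vars (pvars (st_src s)) (map r1 (cvars (st_cl s))),
      Defs.idempotent (st_mgu s),
      relevant (st_mgu s) a (asubst (ren r1) (Defs.head (st_cl s))),
      mgu (st_mgu s) a (asubst (ren r1) (Defs.head (st_cl s))) &
      st_tgt s = psubst (st_mgu s)
        (padd F (pshift (st_sh s) (psubst (ren r1) (body (st_cl s)))))].
Proof.
move=> Hs; have [a0 [p0 [F0 [E0 HwF]]]] := step_src Hs.
case: Hs => a [p [F [E [_ [_ [Hren [Hdis [Hid [Hrel [Hmgu [_ [_ Htgt]]]]]]]]]]]].
move: E0; rewrite E => [[Ea Ep EF]]; subst a0 p0 F0.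
have [r1 [r1i [c1 c2 Er]]] := renaming_eq Hren.
exists a, p, F, r1, r1i; split; split=> //; rewrite -?Er //.
by rewrite -cvars_ren' -Er -E.
Qed.

Lemma var_step S s1 s2 rho rhoi sg (W : seq nat) :
  scheduling_rule S -> S s1 -> S s2 -> st_cl s2 = st_cl s1 ->
  cancel rho rhoi -> cancel rhoi rho -> shifting sg ->
  st_src s2 = pshift sg (psubst (ren rho) (st_src s1)) ->
  {subset pvars (st_src s1) <= W} ->
  disjoint_vars W (cvars (csubst (st_ren s1) (st_cl s1))) ->
  disjoint_vars (map rho W) (cvars (csubst (st_ren s2) (st_cl s2))) ->
  exists g gi z, [/\ cancel g gi, cancel gi g, shifting z,
    st_tgt s2 = pshift z (psubst (ren g) (st_tgt s1)) &
    forall x, x \in W -> st_mgu s2 (rho x) = tsubst (ren g) (st_mgu s1 x)].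
Proof.
move=> HSr S1 S2 Ec d1 d2 Hsg E2 HW D1 D2.
have [HS _] := HSr.
have [a [p [F [r1 [r1i [[E1 HwF c1 c1' Er1] [_ Hid1 Hrel1 Hmgu1 Ht1]]]]]]] := is_stepP (HS _ S1).
have [a2 [p2 [F2 [r2 [r2i [[E2' HwF2 c2 c2' Er2] [_ Hid2 Hrel2 Hmgu2 Ht2]]]]]]] := is_stepP (HS _ S2).
move: (E2'); rewrite E2 E1 => [[Ea2 Ep2 EF2]].
rewrite Er1 cvars_ren' in D1; rewrite Er2 cvars_ren' Ec in D2.
set c := st_cl s1; rewrite -/c in Hrel1 Hmgu1 Ht1; rewrite Ec -/c in Hrel2 Hmgu2 Ht2.
set L := W ++ map r1 (cvars c).
pose gm x := if x \in W then rho x else r2 (r1i x).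
have Hinj : {in L &, injective gm}.
  have Hr1i : injective r1i by apply: can_inj c1'.
  have Hr2 : injective r2 by apply: can_inj c2.
  have Hrho : injective rho by apply: can_inj d1.
  have cross : forall x y, x \in W -> y \in L -> y \notin W -> rho x <> r2 (r1i y).
    move=> x y Hx; rewrite mem_cat => /orP [->//|/mapP [u Hu ->]] _ E.
    have := D2 (rho x); rewrite map_f // => /(_ erefl); rewrite E c1 map_f //.
  move=> x y Hx Hy; rewrite /gm.
  case: (boolP (x \in W)) => HxW; case: (boolP (y \in W)) => HyW.
  - exact: Hrho.
  - by move=> E; case: (cross x y HxW Hy HyW).
  - by move=> E; case: (cross y x HyW Hx HxW).
  - by move=> /Hr2 /Hr1i.
have [mu [[mui m1 m2] Hmu _]] := ext_bij Hinj.
have HmuW : forall x, x \in W -> mu x = rho x.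
  by move=> x Hx; rewrite Hmu ?mem_cat ?Hx // /gm Hx.
have Hmuc : forall y, y \in cvars c -> mu (r1 y) = r2 y.
  move=> y Hy; have Hy' : r1 y \in map r1 (cvars c) by rewrite map_f.
  rewrite Hmu ?mem_cat ?Hy' ?orbT // /gm.
  have -> : (r1 y \in W) = false by apply/negbTE/negP => /D1; rewrite Hy'.
  by rewrite c1.
have HaW : {subset avars a <= W} by move=> x Hx; apply: HW; rewrite E1 /= mem_cat Hx.
have HFW : {subset pvars F <= W} by move=> x Hx; apply: HW; rewrite E1 /= mem_cat Hx orbT.
have Ea : asubst (ren mu) a = a2.
  by rewrite -Ea2; apply: eq_asubst => x Hx; rewrite /ren HmuW // HaW.
have Eb : asubst (ren mu) (asubst (ren r1) (Defs.head c)) = asubst (ren r2) (Defs.head c).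
  rewrite asubst_comp; apply: eq_asubst => y Hy; rewrite /ren /= Hmuc //.
  by rewrite /cvars mem_cat Hy.
have R1 : relevant (cj mu mui (st_mgu s1)) a2 (asubst (ren r2) (Defs.head c)).
  by rewrite -Ea -Eb; apply: cj_relevant.
have M1 : mgu (cj mu mui (st_mgu s1)) a2 (asubst (ren r2) (Defs.head c)).
  by rewrite -Ea -Eb; apply: cj_mgu.
have [dl [Hdl Hth]] := mgu_unique (cj_idem m1 Hid1) R1 M1 Hrel2 Hmgu2.
have [dli e1 e2] := Hdl.
have Key : forall x, st_mgu s2 (mu x) = tsubst (ren (dl \o mu)) (st_mgu s1 x).
  by move=> x; rewrite Hth /cj m1 tsubst_comp.
have [z [Hz Rz1 Rz2]] := det_prio HSr S1 S2 Ec d1 d2 Hsg E1 E2.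
exists (dl \o mu), (mui \o dli), z; split.
- by move=> x /=; rewrite e1 m1.
- by move=> x /=; rewrite m2 e2.
- exact: Hz.
- rewrite Ht2 Ht1 -EF2 /=.
  have EF : pshift sg (psubst (ren rho) F) = pshift z (psubst (ren mu) F).
    rewrite !pshift_psubst -Rz1; apply: eq_psubst => x Hx.
    by rewrite pvars_pshift in Hx; rewrite /ren HmuW // HFW.
  have EY : pshift (st_sh s2) (psubst (ren r2) (body c)) =
            pshift z (psubst (ren mu) (pshift (st_sh s1) (psubst (ren r1) (body c)))).
    rewrite !pshift_psubst Rz2 psubst_comp.
    apply: eq_psubst => y; rewrite pvars_pshift => Hy; rewrite /ren /= Hmuc //.
    by rewrite /cvars mem_cat Hy orbT.
  rewrite EF EY padd_map; last exact: shift_mono_le.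
  rewrite -pshift_psubst; congr pshift; rewrite !psubst_comp.
  by apply: eq_psubst => x _ /=; rewrite Key.
- by move=> x Hx; rewrite -HmuW // Key.
Qed.

Definition cv (f : nat -> step) k := cvars (csubst (st_ren (f k)) (st_cl (f k))).
Fixpoint Uv (G0 : pgoal) (f : nat -> step) k : seq nat :=
  if k is k'.+1 then Uv G0 f k' ++ cv f k' else pvars G0.

Lemma memU G0 f k x : x \in Uv G0 f k -> x \in pvars G0 \/ exists2 t, (t < k)%N & x \in cv f t.
Proof.
elim: k => [|k IH] /=; first by left.
rewrite mem_cat => /orP [/IH [H|[t Ht Hx]]|Hx]; first by left.
  by right; exists t => //; apply: ltnW.
by right; exists k.
Qed.

Lemma in_len_res n k : in_res n k.+1 = in_len n k.
Proof. by case: n. Qed.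
Lemma in_res_len n k j : in_res n k -> (j < k)%N -> in_len n j.
Proof. by case: n => //= m H1 H2; apply: leq_trans H2 H1. Qed.
Lemma in_len_res' n k : in_len n k -> in_res n k.
Proof. by case: n => //= m H; apply: ltnW. Qed.

Lemma deriv_disj P S G0 f n k : pSLD_derivation P S G0 f n -> in_len n k ->
  disjoint_vars (Uv G0 f k) (cv f k).
Proof.
move=> D Hk x /memU [Hx|[t Ht Hx]]; have [_ [_ [_ [D1 D2]]]] := D k Hk.
  exact: D1.
exact: D2 t Ht x Hx.
Qed.

Lemma vars_mgu th a b x v : relevant th a b -> v \in tvars (th x) ->
  v = x \/ v \in avars a \/ v \in avars b.
Proof.
move=> Hr Hv; case: (th x =P Var x) => [E|Ne].
  by left; move: Hv; rewrite E inE => /eqP.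
by right; apply: Hr; right; exists x.
Qed.

Lemma Uv_sub G0 f k k' : (k <= k')%N -> {subset Uv G0 f k <= Uv G0 f k'}.
Proof.
move=> H; elim: k' H => [|k' IH]; first by rewrite leqn0 => /eqP->.
rewrite leq_eqVlt => /orP [/eqP->//|H] x Hx /=; rewrite mem_cat IH //.
Qed.

Lemma bookkeeping P S G0 f n k : scheduling_rule S -> pSLD_derivation P S G0 f n -> in_res n k ->
  {subset pvars (resolvent G0 f k) <= Uv G0 f k} /\ {subset pvars (inst G0 f k) <= Uv G0 f k}.
Proof.
move=> [HS _] D; elim: k => [|k IH] Hk; first by split.
have Hk' : in_len n k by rewrite -in_len_res.
have [IH1 IH2] := IH (in_len_res' Hk').
have [Sk [_ [Esrc _]]] := D k Hk'.
have [a [p [F [r1 [r1i [[E1 _ _ _ Er] [_ _ Hrel _ Ht]]]]]]] := is_stepP (HS _ Sk).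
have Hsrc : {subset pvars (st_src (f k)) <= Uv G0 f k} by rewrite Esrc.
have Hcv : forall v, v \in avars (asubst (ren r1) (Defs.head (st_cl (f k)))) -> v \in Uv G0 f k.+1.
  by move=> v Hv /=; rewrite mem_cat /cv Er /cvars /= mem_cat Hv !orbT.
have Hvars : forall x v, x \in Uv G0 f k.+1 -> v \in tvars (st_mgu (f k) x) -> v \in Uv G0 f k.+1.
  move=> x v Hx /(vars_mgu Hrel) [->//|[Ha|Hb]].
    by rewrite /= mem_cat Hsrc // E1 /= mem_cat Ha.
  exact: Hcv.
split.
- move=> v /=; rewrite Ht => /pvars_psubst [x [Hx Hv]]; apply: (Hvars x) => //.
  move: Hx; rewrite pvars_padd => /orP [Hx|Hx].
    by rewrite /= mem_cat Hsrc // E1 /= mem_cat Hx orbT.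
  by rewrite /= mem_cat /cv Er /cvars /= mem_cat -(pvars_pshift (st_sh (f k))) Hx !orbT.
- move=> v /= /pvars_psubst [x [Hx Hv]]; apply: (Hvars x) => //.
  by rewrite /= mem_cat IH2.
Qed.

Lemma res_agree G0 f g j : (forall t, (t < j)%N -> f t = g t) -> resolvent G0 f j = resolvent G0 g j.
Proof. by case: j => //= j H; rewrite H. Qed.
Lemma inst_agree G0 f g j : (forall t, (t < j)%N -> f t = g t) -> inst G0 f j = inst G0 g j.
Proof.
elim: j => //= j IH H; rewrite H // IH // => t Ht; apply: H; exact: ltnW.
Qed.

Lemma deriv_agree P S G0 f g k : (forall t, (t < k)%N -> f t = g t) ->
  pSLD_derivation P S G0 g (Some k) -> pSLD_derivation P S G0 f (Some k).
Proof.
move=> H D j /= Hj.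
have E2 : resolvent G0 f j = resolvent G0 g j.
  by apply: res_agree => t Ht; apply: H; apply: ltn_trans Ht Hj.
have [A [B [C [E F']]]] := D j Hj.
have F2 : forall t, (t < j)%N -> disjoint_vars (cvars (csubst (st_ren (f t)) (st_cl (f t))))
    (cvars (csubst (st_ren (g j)) (st_cl (g j)))).
  by move=> t Ht; rewrite H; [exact: F' | exact: ltn_trans Ht Hj].
rewrite E2 (H j Hj); exact: (conj A (conj B (conj C (conj E F2)))).
Qed.

Lemma deriv_trunc P S G0 f n k : pSLD_derivation P S G0 f n -> in_res n k ->
  pSLD_derivation P S G0 f (Some k).
Proof. move=> D Hk j /= Hj; apply: D; exact: in_res_len Hk Hj. Qed.

Lemma ren_id : ren id = Var. Proof. by apply: functional_extensionality. Qed.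
Lemma psubst_ren_ren a b G : psubst (ren a) (psubst (ren b) G) = psubst (ren (a \o b)) G.
Proof. by rewrite psubst_comp. Qed.
Lemma pvars_conj z g G : pvars (pshift z (psubst (ren g) G)) = map g (pvars G).
Proof. by rewrite pvars_pshift pvars_ren. Qed.

Lemma var_deriv P S G0 f g n1 n2 k : scheduling_rule S ->
  pSLD_derivation P S G0 f n1 -> pSLD_derivation P S G0 g n2 -> in_res n1 k -> in_res n2 k ->
  (forall t, (t < k)%N -> st_cl (g t) = st_cl (f t)) ->
  forall u, (u <= k)%N -> exists gm gmi z, [/\ cancel gm gmi, cancel gmi gm, shifting z,
    resolvent G0 g u = pshift z (psubst (ren gm) (resolvent G0 f u)) &
    inst G0 g u = psubst (ren gm) (inst G0 f u)].
Proof.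
move=> HSr Df Dg Hk1 Hk2 Hcl; elim=> [|u IH] Hu.
  exists id, id, id; split; [by []|by []|exact: shifting_id| |];
    by rewrite /= ren_id psubst_Var ?pshift_id.
have [gm [gmi [z [c1 c2 Hz Er Ei]]]] := IH (ltnW Hu).
have Hf := in_res_len Hk1 Hu; have Hg := in_res_len Hk2 Hu.
have [Sf [_ [Esf _]]] := Df u Hf; have [Sg [_ [Esg _]]] := Dg u Hg.
have [Bf1 Bf2] := bookkeeping HSr Df (in_len_res' Hf).
have [Bg1 Bg2] := bookkeeping HSr Dg (in_len_res' Hg).
set W := pvars (resolvent G0 f u) ++ pvars (inst G0 f u).
have X1 : st_src (g u) = pshift z (psubst (ren gm) (st_src (f u))) by rewrite Esg Esf Er.
have X2 : {subset pvars (st_src (f u)) <= W} by move=> x Hx; rewrite /W mem_cat -Esf Hx.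
have X3 : disjoint_vars W (cvars (csubst (st_ren (f u)) (st_cl (f u)))).
  move=> x; rewrite mem_cat => /orP [/Bf1|/Bf2];
  by have := deriv_disj Df Hf; rewrite /disjoint_vars /cv; apply.
have X4 : disjoint_vars (map gm W) (cvars (csubst (st_ren (g u)) (st_cl (g u)))).
  move=> x; rewrite map_cat mem_cat -!pvars_ren -Ei -(pvars_pshift z) -Er.
  by move=> /orP [/Bg1|/Bg2]; by have := deriv_disj Dg Hg; rewrite /disjoint_vars /cv; apply.
have [g' [gi' [z' [d1 d2 Hz' Et Em]]]] :=
  @var_step S (f u) (g u) gm gmi z W HSr Sf Sg (Hcl u Hu) c1 c2 Hz X1 X2 X3 X4.
exists g', gi', z'; split=> //=.
rewrite Ei !psubst_comp; apply: eq_psubst => x Hx /=.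
by rewrite Em // /W mem_cat Hx orbT.
Qed.

Lemma in_res_le n j k : in_res n k -> (j <= k)%N -> in_res n j.
Proof. by case: n => //= m H1 H2; apply: leq_trans H2 H1. Qed.

Definition prune_at G0 f i j : Prop :=
  exists (tau : subst) (tau' : rat -> rat), renaming tau /\ shifting tau' /\
    inst G0 f j = psubst tau (inst G0 f i) /\
    resolvent G0 f j = pshift tau' (psubst tau (resolvent G0 f i)).

Lemma prunedP G0 f n : pruned_by_pEVRL G0 f n <-> exists i j, [/\ (i < j)%N, in_res n j & prune_at G0 f i j].
Proof.
split.
  by case=> i [j [tau [tau' [Hij [Hj [Ht [Ht' [E1 E2]]]]]]]]; exists i, j; split=> //; exists tau, tau'.
case=> i [j [Hij Hj [tau [tau' [Ht [Ht' [E1 E2]]]]]]].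
by exists i, j, tau, tau'.
Qed.

Lemma prune_transfer P S G0 f g n1 n2 k i j : scheduling_rule S ->
  pSLD_derivation P S G0 f n1 -> pSLD_derivation P S G0 g n2 -> in_res n1 k -> in_res n2 k ->
  (forall t, (t < k)%N -> st_cl (g t) = st_cl (f t)) ->
  (i < j)%N -> (j <= k)%N -> prune_at G0 f i j -> pruned_by_pEVRL G0 g n2.
Proof.
move=> HSr Df Dg Hk1 Hk2 Hcl Hij Hjk [tau [tau' [Ht [Ht' [E1 E2]]]]].
have Hik : (i <= k)%N by apply: leq_trans (ltnW Hij) Hjk.
have [gi [gii [zi [ci1 ci2 Hzi Eri Eii]]]] := var_deriv HSr Df Dg Hk1 Hk2 Hcl Hik.
have [gj [gji [zj [cj1 cj2 Hzj Erj Eij]]]] := var_deriv HSr Df Dg Hk1 Hk2 Hcl Hjk.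
have [rt [rti [e1 e2 Ert]]] := renaming_eq Ht.
have [zii [Hzii f1 f2]] := shifting_inv Hzi.
apply/prunedP; exists i, j; split=> //; first exact: in_res_le Hk2 Hjk.
exists (ren (gj \o rt \o gii)), (zj \o tau' \o zii); split.
  have B1 : bijective gj by exists gji.
  have B2 : bijective rt by exists rti.
  have B3 : bijective gii by exists gi.
  by apply: renaming_ren; apply: bij_comp; [apply: bij_comp|].
split; first by apply: shifting_comp => //; apply: shifting_comp.
have Fi : inst G0 f i = psubst (ren gii) (inst G0 g i) by rewrite Eii psubst_renK.
have Fr : resolvent G0 f i = pshift zii (psubst (ren gii) (resolvent G0 g i)).
  by rewrite Eri unconj.
split.
  by rewrite Eij E1 Fi Ert !psubst_ren_ren.
rewrite Erj E2 Fr Ert !pshift_psubst !psubst_ren_ren !pshift_comp.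
by [].
Qed.

Definition upd (g : nat -> step) k (s : step) : nat -> step := fun t => if t == k then s else g t.

Lemma cv_sub_U G0 f t k : (t < k)%N -> {subset cv f t <= Uv G0 f k}.
Proof. move=> H x Hx; apply: (Uv_sub H); by rewrite /= mem_cat Hx orbT. Qed.

Lemma extend P S G0 g k s gm gmi z : scheduling_rule S ->
  pSLD_derivation P S G0 g (Some k) -> S s -> List.In (st_cl s) P ->
  cancel gm gmi -> cancel gmi gm -> shifting z ->
  resolvent G0 g k = pshift z (psubst (ren gm) (st_src s)) ->
  exists b bi, [/\ cancel b bi, cancel bi b,
    pSLD_derivation P S G0 (upd g k (cstep b bi z s)) (Some k.+1) &
    {in pvars (st_src s), b =1 gm}].
Proof.
move=> HSr D Ss HP c1 c2 Hz Er.
have [HS _] := HSr.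
have [_ [_ [_ [_ [_ [_ [_ [Hdis _]]]]]]]] : is_step s by apply: HS.
set src := st_src s; set cvs := cvars (csubst (st_ren s) (st_cl s)).
set A := Uv G0 g k; set A' := A ++ map gm (pvars src).
pose gf x := if x \in pvars src then gm x else freshf A' x.
have Hinj : {in pvars src ++ cvs &, injective gf}.
  have Hgm : injective gm by apply: can_inj c1.
  move=> xx yy _ _; rewrite /gf.
  case: (boolP (xx \in pvars src)) => Hx; case: (boolP (yy \in pvars src)) => Hy.
  - exact: Hgm.
  - move=> E; have := freshf_notin A' yy; rewrite -E /A' mem_cat map_f ?orbT //.
  - move=> E; have := freshf_notin A' xx; rewrite E /A' mem_cat map_f ?orbT //.
  - exact: freshf_inj.
have [b [[bi b1 b2] Hb _]] := ext_bij Hinj.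
have Hbsrc : {in pvars src, b =1 gm}.
  move=> x Hx; have Hxl : x \in pvars src ++ cvs by rewrite mem_cat Hx.
  by rewrite (Hb x Hxl) /gf Hx.
have Hbc : forall y, y \in cvs -> b y \notin A.
  move=> y Hy; have Hy' : y \notin pvars src by apply/negP => /Hdis; rewrite Hy.
  have Hyl : y \in pvars src ++ cvs by rewrite mem_cat Hy orbT.
  rewrite (Hb y Hyl) /gf (negbTE Hy').
  by apply: contra (freshf_notin A' y); rewrite /A' mem_cat => ->.
set s' := cstep b bi z s.
have Ss' : S s' by apply: S_conj.
have Hcv : cv (upd g k s') k = map b cvs by rewrite /cv /upd eqxx /= cvars_ren.
have Hnew : forall v, v \in cv (upd g k s') k -> v \notin A.
  by move=> v; rewrite Hcv => /mapP [w Hw ->]; apply: Hbc.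
exists b, bi; split=> //.
move=> j /= Hj.
have Hres : resolvent G0 (upd g k s') j = resolvent G0 g j.
  by apply: res_agree => t Ht; rewrite /upd (ltn_eqF (leq_trans Ht (Hj : (j <= k)%N))).
case: (ltngtP j k) => [Hjk|Hkj|Ejk].
- have [A1 [A2 [A3 [A4 A5]]]] := D j Hjk.
  rewrite Hres /upd (ltn_eqF Hjk); do 4 (split=> //).
  move=> t Ht; rewrite (ltn_eqF (ltn_trans Ht Hjk)); exact: A5.
- by move: Hj; rewrite ltnS leqNgt Hkj.
- subst j; rewrite Hres.
  split; first by rewrite /upd eqxx.
  split; first by rewrite /upd eqxx.
  split.
    rewrite /upd eqxx /s' /= Er /src; congr pshift; apply: eq_psubst => x Hx.
    by rewrite /ren Hbsrc.
  split.
    move=> x Hx; have := Hnew x; rewrite /cv => H; apply/negP => /H.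
    by rewrite (@Uv_sub G0 g 0 k (leq0n k) x).
  move=> t Ht x Hx; have := Hnew x; rewrite /cv => H; apply/negP => /H.
  rewrite (@cv_sub_U G0 g t k Ht x) //; move: Hx; by rewrite /upd (ltn_eqF Ht).
Qed.

Lemma shorten_gen P S G0 f m i j : scheduling_rule S -> pSLD_derivation P S G0 f (Some m) ->
  (i < j)%N -> (j <= m)%N -> prune_at G0 f i j ->
  forall u, (j + u <= m)%N -> exists g gm gmi z, [/\ cancel gm gmi, cancel gmi gm, shifting z,
    pSLD_derivation P S G0 g (Some (i + u)) &
    resolvent G0 g (i + u) = pshift z (psubst (ren gm) (resolvent G0 f (j + u)))].
Proof.
move=> HSr D Hij Hjm [tau [tau' [Ht [Ht' [E1 E2]]]]].
elim=> [|u IH] Hu.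
  have [rt [rti [e1 e2 Ert]]] := renaming_eq Ht.
  have [ti [Hti f1 f2]] := shifting_inv Ht'.
  exists f, rti, rt, ti; split=> //.
    by apply: deriv_trunc D _; rewrite /= addn0; apply: leq_trans (ltnW Hij) Hjm.
  by rewrite !addn0 E2 Ert unconj.
have Hu' : (j + u <= m)%N by apply: leq_trans Hu; rewrite leq_add2l.
have [g [gm [gmi [z [c1 c2 Hz Dg Eg]]]]] := IH Hu'.
have Hl : in_len (Some m) (j + u) by rewrite /= -addnS.
have [Ss [HP [Esrc _]]] := D _ Hl.
have Eg' : resolvent G0 g (i + u) = pshift z (psubst (ren gm) (st_src (f (j + u)))) by rewrite Esrc.
have [b [bi [b1 b2 Dg' Hb]]] := extend HSr Dg Ss HP c1 c2 Hz Eg'.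
exists (upd g (i + u) (cstep b bi z (f (j + u)))), b, bi, z; split=> //.
  by rewrite addnS.
by rewrite !addnS /= /upd eqxx.
Qed.

Lemma shorten_der P S G0 f m i j u : scheduling_rule S -> pSLD_derivation P S G0 f (Some m) ->
  (i < j)%N -> (j <= m)%N -> prune_at G0 f i j -> (j + u <= m)%N ->
  exists g, pSLD_derivation P S G0 g (Some (i + u)) /\
    size (resolvent G0 g (i + u)) = size (resolvent G0 f (j + u)).
Proof.
move=> HSr D Hij Hjm Hp Hu.
have [g [gm [gmi [z [_ _ _ Dg Eg]]]]] := shorten_gen HSr D Hij Hjm Hp Hu.
by exists g; split=> //; rewrite Eg size_pshift size_psubst.
Qed.

Definition maxbody (P : program) : nat := maxl (map (fun c => size (body c)) P).

Lemma maxbody_ge P c : List.In c P -> (size (body c) <= maxbody P)%N.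
Proof.
rewrite /maxbody; elim: P => //= d P IH [<-|H]; first exact: leq_maxl.
exact: leq_trans (IH H) (leq_maxr _ _).
Qed.

Lemma size_res P S G0 f n k : scheduling_rule S -> pSLD_derivation P S G0 f n -> in_res n k ->
  (size (resolvent G0 f k) <= size G0 + k * maxbody P)%N.
Proof.
move=> [HS _] D; elim: k => [|k IH] Hk; first by rewrite mul0n addn0.
have Hk' : in_len n k by rewrite -in_len_res.
have [Sk [HP [Esrc _]]] := D k Hk'.
have [a [p [F [r1 [r1i [[E1 _ _ _ _] [_ _ _ _ Ht]]]]]]] := is_stepP (HS _ Sk).
have Hb : (size (body (st_cl (f k))) <= maxbody P)%N.
  exact: maxbody_ge.
have := IH (in_len_res' Hk'); rewrite -Esrc E1 /= => H.
rewrite Ht size_psubst size_padd size_pshift size_psubst mulSn addnCA addnA.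
by rewrite addnC -addnA; apply: leq_add => //; apply: ltnW.
Qed.

Definition dc : clause := Clause (Atom 0 [::]) [::].
Definition ds : step := Step [::] dc Var Var id [::].

Section Konig.
Variables (P : program) (S : step_set) (G0 : pgoal).
Hypothesis HSr : scheduling_rule S.

Definition PF f m := pSLD_derivation P S G0 f (Some m) /\ ~ pruned_by_pEVRL G0 f (Some m).

Definition Good (cs : seq clause) := forall L, exists f m, [/\ PF f m, (L <= m)%N, (size cs <= m)%N &
  forall t, (t < size cs)%N -> st_cl (f t) = nth dc cs t].

Lemma fin_bound (B : clause -> nat -> Prop) (l : seq clause) :
  (forall c L L', (L <= L')%N -> B c L -> B c L') ->
  (forall c, List.In c l -> exists L, B c L) -> exists L, forall c, List.In c l -> B c L.
Proof.
move=> Hmono; elim: l => [|c l IH] H; first by exists 0%N.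
have [L1 H1] := H c (or_introl erefl).
have [L2 H2] := IH (fun d Hd => H d (or_intror Hd)).
exists (maxn L1 L2) => d [<-|Hd].
  by apply: Hmono H1; apply: leq_maxl.
by apply: Hmono (H2 d Hd); apply: leq_maxr.
Qed.

Lemma Good_step cs : Good cs -> exists c, Good (rcons cs c).
Proof.
move=> Hg; apply: NNPP => Hn.
pose B c L := ~ exists f m, [/\ PF f m, (L <= m)%N, (size (rcons cs c) <= m)%N &
  forall t, (t < size (rcons cs c))%N -> st_cl (f t) = nth dc (rcons cs c) t].
have Hmono : forall c L L', (L <= L')%N -> B c L -> B c L'.
  move=> c L L' HL HB [f [m [H1 H2 H3 H4]]]; apply: HB; exists f, m; split=> //.
  exact: leq_trans HL H2.
have HB : forall c, List.In c P -> exists L, B c L.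
  move=> c _; apply: NNPP => H; apply: Hn; exists c => L.
  apply: NNPP => H'; apply: H; exists L; exact: H'.
have [L0 HL0] := fin_bound Hmono HB.
have [f [m [[Df Pf] H1 H2 H3]]] := Hg (maxn L0 (size cs).+1).
have Hm : (size cs < m)%N by apply: leq_trans H1; apply: leq_maxr.
have [_ [HP _]] := Df (size cs) Hm.
apply: (HL0 _ HP); exists f, m; split=> //.
- by apply: leq_trans H1; apply: leq_maxl.
- by rewrite size_rcons.
- move=> t; rewrite size_rcons ltnS leq_eqVlt => /orP [/eqP->|Ht].
    by rewrite nth_rcons ltnn eqxx.
  by rewrite nth_rcons Ht H3.
Qed.

Definition nextc cs := epsilon (inhabits dc) (fun c => Good (rcons cs c)).
Fixpoint pre n := if n is n'.+1 then rcons (pre n') (nextc (pre n')) else [::].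
Definition cseq t := nth dc (pre t.+1) t.

Lemma size_pre n : size (pre n) = n.
Proof. by elim: n => //= n IH; rewrite size_rcons IH. Qed.

Lemma Good_pre n : Good [::] -> Good (pre n).
Proof.
move=> H0; elim: n => //= n IH; rewrite /nextc.
have [c Hc] := Good_step IH.
exact: (epsilon_spec (inhabits dc) (fun c => Good (rcons (pre n) c)) (ex_intro _ c Hc)).
Qed.

Lemma pre_nth n t : (t < n)%N -> nth dc (pre n) t = cseq t.
Proof.
elim: n => // n IH; rewrite ltnS leq_eqVlt => /orP [/eqP->//|Ht] /=.
by rewrite nth_rcons size_pre Ht IH.
Qed.
End Konig.

Section Dinf.
Variables (P : program) (S : step_set) (G0 : pgoal).
Hypothesis HSr : scheduling_rule S.
Hypothesis Hg0 : Good P S G0 [::].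

Notation cseq := (cseq P S G0).

Definition ext_ok (ss : seq step) (s : step) :=
  pSLD_derivation P S G0 (nth ds (rcons ss s)) (Some (size ss).+1) /\ st_cl s = cseq (size ss).
Definition nexts ss := epsilon (inhabits ds) (ext_ok ss).
Fixpoint dpre n := if n is n'.+1 then rcons (dpre n') (nexts (dpre n')) else [::].

Definition Inv n := [/\ size (dpre n) = n, pSLD_derivation P S G0 (nth ds (dpre n)) (Some n) &
  forall t, (t < n)%N -> st_cl (nth ds (dpre n) t) = cseq t].

Lemma nth_rcons_upd (ss : seq step) s : nth ds (rcons ss s) = upd (nth ds ss) (size ss) s.
Proof.
apply: functional_extensionality => t; rewrite nth_rcons /upd.
case: (ltngtP t (size ss)) => [Ht|Ht|Ht] //.
- by rewrite nth_default // ltnW.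
Qed.

Lemma ext_exists n : Inv n -> exists s, ext_ok (dpre n) s.
Proof.
case=> Hsz Dd Hcl.
set d := nth ds (dpre n).
have [e [m [[De Pe] Hm _ He]]] := Good_pre n.+1 Hg0 n.+1.
rewrite size_pre in He.
have Hcl' : forall t, (t < n)%N -> st_cl (e t) = st_cl (d t).
  move=> t Ht; have Ht' : (t < n.+1)%N by apply: ltnW.
  by rewrite He // /d Hcl // (@pre_nth P S G0 n.+1).
have Hnm : in_res (Some m) n by apply: ltnW.
have [gm [gmi [z [c1 c2 Hz Er _]]]] := var_deriv HSr Dd De (leqnn n) Hnm Hcl' (leqnn n).
have [Se [HPe [Ese _]]] := De n Hm.
have [zi [Hzi f1 f2]] := shifting_inv Hz.
have [HS [[Hc1 Hc2] _]] := HSr.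
have Hst := conj_step c2 c1 Hzi (HS _ Se).
have Esc : st_src (cstep gmi gm zi (e n)) = resolvent G0 d n by rewrite /= Ese Er unconj.
have [s'' [S'' [Es'' Ec'']]] := Hc1 (resolvent G0 d n) (st_cl (e n))
  (ex_intro _ _ (conj Hst (conj Esc erefl))).
have HP'' : List.In (st_cl s'') P by rewrite Ec''.
have Er'' : resolvent G0 d n = pshift id (psubst (ren id) (st_src s'')).
  by rewrite Es'' ren_id psubst_Var pshift_id.
have [b [bi [b1 b2 Dn _]]] := extend HSr Dd S'' HP'' (fun x => erefl) (fun x => erefl) shifting_id Er''.
exists (cstep b bi id s''); split.
  by rewrite nth_rcons_upd Hsz.
by rewrite /= Ec'' Hsz He // -(@pre_nth P S G0 n.+1).
Qed.

Lemma Inv_all n : Inv n.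
Proof.
elim: n => [|n IH]; first by split=> // j.
have [s Hs] := ext_exists IH.
have [Hsz _ Hcl] := IH.
have [D Ec] := epsilon_spec (inhabits ds) (ext_ok (dpre n)) (ex_intro _ s Hs).
split.
- by rewrite /= size_rcons Hsz.
- by move: D; rewrite /= Hsz /nexts.
- move=> t; rewrite ltnS leq_eqVlt => /orP [/eqP->|Ht] /=.
    by rewrite nth_rcons Hsz ltnn eqxx /nexts Ec Hsz.
  by rewrite nth_rcons Hsz Ht Hcl.
Qed.

Definition finf t := nth ds (dpre t.+1) t.

Lemma dpre_nth n t : (t < n)%N -> nth ds (dpre n) t = finf t.
Proof.
elim: n => // n IH; rewrite ltnS leq_eqVlt => /orP [/eqP->//|Ht] /=.
have [Hsz _ _] := Inv_all n.
by rewrite nth_rcons Hsz Ht IH.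
Qed.

Lemma finf_deriv_k k : pSLD_derivation P S G0 finf (Some k).
Proof.
have [_ D _] := Inv_all k.
by apply: deriv_agree D => t Ht; rewrite dpre_nth.
Qed.

Lemma finf_deriv : pSLD_derivation P S G0 finf None.
Proof. by move=> j _; exact: (@finf_deriv_k j.+1 j (ltnSn j)). Qed.

Lemma finf_cl t : st_cl (finf t) = cseq t.
Proof. have [_ _ H] := Inv_all t.+1; rewrite -(@dpre_nth t.+1 t) //; exact: H. Qed.

Lemma finf_not_pruned : ~ pruned_by_pEVRL G0 finf None.
Proof.
move=> /prunedP [i [j [Hij _ Hp]]].
have [e [m [[De Pe] Hm _ He]]] := Good_pre j Hg0 j.
rewrite size_pre in He.
apply: Pe; apply: (prune_transfer HSr finf_deriv De (k:=j)) Hij (leqnn j) Hp => //.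
by move=> t Ht; rewrite He // finf_cl pre_nth.
Qed.
End Dinf.

Lemma pf_bounded P S G0 : scheduling_rule S ->
  (forall f : nat -> step, pSLD_derivation P S G0 f None -> pruned_by_pEVRL G0 f None) ->
  exists M, forall f m, PF P S G0 f m -> (m <= M)%N.
Proof.
move=> HSr Hyp; apply: NNPP => H.
have Hg0 : Good P S G0 [::].
  move=> L; apply: NNPP => H'; apply: H; exists L => f m Hpf.
  rewrite leqNgt; apply/negP => HL; apply: H'; exists f, m; split=> //.
  exact: ltnW.
exact: (finf_not_pruned HSr Hg0 (Hyp _ (finf_deriv HSr Hg0))).
Qed.

Lemma finite_bound P S G0 M : scheduling_rule S ->
  (forall f m, PF P S G0 f m -> (m <= M)%N) ->
  forall N m f, (m <= N)%N -> pSLD_derivation P S G0 f (Some m) ->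
  forall k, (k <= m)%N -> (size (resolvent G0 f k) <= size G0 + M * maxbody P)%N.
Proof.
move=> HSr HM; elim=> [|N IH] m f HmN D k Hk.
- case: (classic (pruned_by_pEVRL G0 f (Some m))) => [/prunedP [i [j [Hij Hj _]]]|Hnp].
    by move: HmN Hj Hij; rewrite leqn0 => /eqP-> /=; rewrite leqn0 => /eqP->.
  have HmM := HM f m (conj D Hnp).
  apply: leq_trans (size_res HSr D Hk) _; rewrite leq_add2l leq_mul2r.
  by rewrite (leq_trans Hk HmM) orbT.
case: (classic (pruned_by_pEVRL G0 f (Some m))) => [/prunedP [i [j [Hij Hj Hp]]]|Hnp].
  have HjN : (j <= N.+1)%N by apply: leq_trans Hj HmN.
  case: (ltnP k j) => Hkj.
    apply: (IH k f) => //.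
      by rewrite -ltnS; apply: leq_trans Hkj HjN.
    by apply: deriv_trunc D _; apply: leq_trans (ltnW Hkj) Hj.
  have Eu : k = (j + (k - j))%N by rewrite subnKC.
  have Hu : (j + (k - j) <= m)%N by rewrite -Eu.
  have [g [Dg Eg]] := shorten_der HSr D Hij Hj Hp Hu.
  rewrite Eu -Eg; apply: (IH (i + (k - j))%N g _ Dg (i + (k - j))%N (leqnn _)).
  rewrite -ltnS; apply: leq_trans HmN; apply: leq_trans Hk.
  by rewrite {2}Eu ltn_add2r.
have HmM := HM f m (conj D Hnp).
apply: leq_trans (size_res HSr D Hk) _; rewrite leq_add2l leq_mul2r.
by rewrite (leq_trans Hk HmM) orbT.
Qed.

Theorem lemmaL5p2p1 (P : program) (G : pgoal) (S : step_set) :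
  program_wf P -> pgoal_wf G -> scheduling_rule S ->
  (forall f : nat -> step, pSLD_derivation P S G f None -> pruned_by_pEVRL G f None) ->
  exists l : nat, forall (f : nat -> step) (n : option nat),
    pSLD_derivation P S G f n ->
    forall j : nat, in_res n j -> (size (resolvent G f j) <= l)%N.
Proof.
move=> _ _ HSr Hyp.
have [M HM] := pf_bounded HSr Hyp.
exists (size G + M * maxbody P)%N => f n D j Hj.
have Dj := deriv_trunc D Hj.
exact: (finite_bound HSr HM (leqnn j) Dj (leqnn j)).
Qed.
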